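(* Let $G$ be a graph and $l \ge \gamma(G)$ an integer, and let $A$ and $B$ be dominating sets of $G$ with $|A| = |B| = l$. If there is a path in $D_{l+1}(G)$ joining $A$ and $B$, then there exists a walk between $A$ and $B$ in $D_{l+1}(G)$ all of whose vertices are dominating sets of cardinality $l$ or $l+1$.
   Context: All graphs are finite and simple. A set $S \subseteq V(G)$ is a dominating set of $G$ if every vertex of $V(G)\setminus S$ is adjacent to a vertex of $S$. $\gamma(G)$ is the minimum cardinality of a dominating set of $G$. For an integer $k \ge \gamma(G)$, the $k$-dominating graph $D_k(G)$ is the graph whose vertices are the dominating sets of $G$ of cardinality at most $k$, with two such sets $A,B$ adjacent if and only if their symmetric difference $(A\setminus B)\cup(B\setminus A)$ consists of exactly one vertex of $G$. *)

(* Defs.v *)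
(* A finite simple graph G is a vertex type T : finType with a
   symmetric irreflexive adjacency relation e : rel T. *)
From mathcomp Require Import all_boot.
Set Implicit Arguments. Unset Strict Implicit. Unset Printing Implicit Defensive.

Section Dom.
Variables (T : finType) (e : rel T).

Definition dominating (S : {set T}) : bool :=
  [forall x, (x \notin S) ==> [exists y in S, e x y]].

(* domination number gamma(G): minimum cardinality of a dominating set
   (the full vertex set is always dominating, so #|T| is a valid default). *)
Definition gamma : nat :=
  \big[minn/#|T|]_(S : {set T} | dominating S) #|S|.

Definition Dk_vertex (k : nat) (S : {set T}) : bool :=
  dominating S && (#|S| <= k).

Definition Dk_adj (k : nat) : rel {set T} :=
  fun A B => [&& Dk_vertex k A, Dk_vertex k B &
                 #|(A :\: B) :|: (B :\: A)| == 1].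
End Dom.

(* Main.v *)
Require Import Defs.
From mathcomp Require Import all_boot.
From mathcomp Require Import zify.

Section S.
Set Implicit Arguments.
Variables (T : finType) (e : rel T) (l : nat).

Lemma dom_mono (D S : {set T}) : dominating e D -> D \subset S -> dominating e S.
Proof.
move=> /forallP hD DS; apply/forallP => x; apply/implyP => xS.
have xD : x \notin D by apply: contra xS; apply: (subsetP DS).
have /existsP [y /andP [yD exy]] := implyP (hD x) xD.
by apply/existsP; exists y; rewrite (subsetP DS y yD).
Qed.

Lemma adj_sym : symmetric (Dk_adj e l.+1).
Proof. by move=> A B; rewrite /Dk_adj setUC; case: (Dk_vertex e l.+1 A); case: (Dk_vertex e l.+1 B). Qed.

Lemma add_adj (A : {set T}) y : y \notin A -> dominating e A -> #|y |: A| <= l.+1 ->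
  Dk_adj e l.+1 A (y |: A).
Proof.
move=> yA dA c.
have dA' : dominating e (y |: A) by apply: dom_mono dA _; apply: subsetUr.
have cA : #|A| <= l.+1.
  by apply: leq_trans c; apply: subset_leq_card; apply: subsetUr.
rewrite /Dk_adj /Dk_vertex dA dA' cA c /=.
rewrite (_ : _ :|: _ = [set y]) ?cards1 //.
apply/setP => z; rewrite !inE.
have [->|nzy] := eqVneq z y; first by rewrite (negbTE yA).
by case: (z \in A).
Qed.

Definition good (S : {set T}) := (#|S| == l) || (#|S| == l.+1).

Definition conn (X Y : {set T}) := exists w : seq {set T},
    [/\ path (Dk_adj e l.+1) X w, last X w = Y & all good (X :: w)].

Lemma conn_refl X : good X -> conn X X.
Proof. by move=> g; exists [::]; rewrite /= g. Qed.

Lemma conn_step X Y : Dk_adj e l.+1 X Y -> good X -> good Y -> conn X Y.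
Proof. by move=> a gX gY; exists [:: Y]; rewrite /= a gX gY. Qed.

Lemma conn_trans X Y Z : conn X Y -> conn Y Z -> conn X Z.
Proof.
move=> [w1 [p1 l1 a1]] [w2 [p2 l2 a2]]; exists (w1 ++ w2); split.
- by rewrite cat_path p1 l1 p2.
- by rewrite last_cat l1.
- by rewrite -cat_cons all_cat a1; case/andP: a2.
Qed.

Lemma dom_of_adj (D X : {set T}) : dominating e D -> D \subset X -> #|D| <= l ->
  #|X| = l.+1 -> exists X' : {set T}, [/\ D \subset X', #|X'| = l & Dk_adj e l.+1 X' X].
Proof.
move=> dD DX cD cX.
have : 0 < #|X :\: D| by rewrite cardsD (setIidPr DX); lia.
case/card_gt0P => x; rewrite inE => /andP [xD xX].
exists (X :\ x); split.
- apply/subsetP => z zD; rewrite !inE (subsetP DX z zD) andbT.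
  by apply: contraNneq xD => <-.
- by move: (cardsD1 x X); rewrite xX cX => -[].
- rewrite -{2}(setD1K xX).
  apply: add_adj; first by rewrite !inE eqxx.
  + by apply: dom_mono dD _; apply/subsetP => z zD; rewrite !inE (subsetP DX z zD) andbT; apply: contraNneq xD => <-.
  + by rewrite setD1K // cX.
Qed.

Lemma eq_size (D Y : {set T}) : dominating e D -> D \subset Y -> #|Y| = l ->
  forall n X, #|X :\: Y| = n -> D \subset X -> #|X| = l -> conn X Y.
Proof.
move=> dD DY cY; elim=> [|n IH] X cXY DX cX.
  have XY : X \subset Y by rewrite -setD_eq0 -cards_eq0 cXY.
  have XeY : X = Y by apply/eqP; rewrite eqEcard XY cX cY leqnn.
  rewrite XeY.
  by apply: conn_refl; rewrite /good cY eqxx.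
have : 0 < #|X :\: Y| by rewrite cXY.
case/card_gt0P => x; rewrite inE => /andP [xY xX].
have : 0 < #|Y :\: X| by move: cXY; rewrite !cardsD setIC; lia.
case/card_gt0P => y; rewrite inE => /andP [yX yY].
set X1 := y |: X.
have c1 : #|X1| = l.+1 by rewrite cardsU1 yX cX.
have x1 : x \in X1 by rewrite !inE xX orbT.
have xD : x \notin D by apply: contra xY; apply: (subsetP DY).
have D2 : D \subset X1 :\ x.
  apply/subsetP => z zD; rewrite !inE (subsetP DX z zD) !orbT andbT.
  by apply: contraNneq xD => <-.
have c2 : #|X1 :\ x| = l by move: (cardsD1 x X1); rewrite x1 c1 => -[].
have dX : dominating e X by apply: dom_mono dD DX.
apply: conn_trans (_ : conn X X1) _.
  apply: conn_step; first by apply: add_adj => //; rewrite c1.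
  - by rewrite /good cX eqxx.
  - by rewrite /good c1 eqxx orbT.
apply: conn_trans (_ : conn X1 (X1 :\ x)) _.
  apply: conn_step.
  - rewrite adj_sym -{2}(setD1K x1).
    apply: add_adj; first by rewrite !inE eqxx.
    + by apply: dom_mono dD D2.
    + by rewrite setD1K // c1.
  - by rewrite /good c1 eqxx orbT.
  - by rewrite /good c2 eqxx.
apply: IH => //.
have -> : (X1 :\ x) :\: Y = (X :\: Y) :\ x.
  apply/setP => z; rewrite !inE.
  have [->|nzy] := eqVneq z y; first by rewrite yY /= andbF.
  by rewrite /=; case: (z == x); case: (z \in X); case: (z \in Y).
by move: (cardsD1 x (X :\: Y)); rewrite !inE xY xX cXY => -[].
Qed.

Lemma lemP (D X Y : {set T}) : dominating e D -> #|D| <= l ->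
  D \subset X -> D \subset Y -> good X -> good Y -> conn X Y.
Proof.
move=> dD cD DX DY gX gY.
have red : forall Z : {set T}, D \subset Z -> good Z ->
    exists Z' : {set T}, [/\ D \subset Z', #|Z'| = l, conn Z Z' & conn Z' Z].
  move=> Z DZ /orP [/eqP cZ|/eqP cZ].
    by exists Z; split => //; apply: conn_refl; rewrite /good cZ eqxx.
  have [Z' [DZ' cZ' a]] := dom_of_adj dD DZ cD cZ.
  exists Z'; split => //; apply: conn_step => //; try by rewrite adj_sym.
  1-4: rewrite /good; apply/orP; first [by right; apply/eqP | by left; apply/eqP].
have [X' [DX' cX' hX _]] := red X DX gX.
have [Y' [DY' cY' _ hY]] := red Y DY gY.
apply: conn_trans hX _; apply: conn_trans hY.
exact: (eq_size dD DY' cY' erefl DX' cX').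
Qed.

Lemma pad (S : {set T}) n : #|S| <= n <= #|T| -> exists X : {set T}, S \subset X /\ #|X| = n.
Proof.
elim: n => [|n IH] /andP [h1 h2].
  by exists S; split => //; lia.
have [E|NE] := eqVneq #|S| n.+1; first by exists S.
have [X [SX cX]] : exists X : {set T}, S \subset X /\ #|X| = n by apply: IH; lia.
have : 0 < #|~: X| by rewrite cardsCs setCK; lia.
case/card_gt0P => z; rewrite inE => zX.
exists (z |: X); split; first by apply: subset_trans SX (subsetUr _ _).
by rewrite cardsU1 zX cX.
Qed.

Lemma adj_inter (S S' : {set T}) : Dk_adj e l.+1 S S' ->
  exists D : {set T}, [/\ dominating e D, #|D| <= l, D \subset S & D \subset S'].
Proof.
case/and3P => /andP [dS cS] /andP [dS' cS'] /eqP c.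
have dis : (S :\: S') :&: (S' :\: S) = set0.
  by apply/setP => z; rewrite !inE; case: (z \in S); case: (z \in S').
move: c; rewrite cardsU dis cards0 subn0.
case E : #|S :\: S'| => [|[|k]] /=.
- move=> h; have SS : S \subset S' by rewrite -setD_eq0 -cards_eq0 E.
  exists S; split => //.
  move: (cardsID S S'); rewrite (setIidPr SS); lia.
- move=> h; have SS : S' \subset S.
    by rewrite -setD_eq0 -cards_eq0; apply/eqP; lia.
  exists S'; split => //.
  move: (cardsID S' S); rewrite (setIidPr SS); lia.
- lia.
Qed.

End S.

Theorem lemma10 (T : finType) (e : rel T)
    (e_sym : symmetric e) (e_irr : irreflexive e)
    (l : nat) (hl : gamma e <= l)
    (A B : {set T}) (hA : dominating e A) (hB : dominating e B)
    (cA : #|A| = l) (cB : #|B| = l) :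
  (exists p : seq {set T},
      [/\ path (Dk_adj e l.+1) A p, last A p = B & uniq (A :: p)]) ->
  exists w : seq {set T},
    [/\ path (Dk_adj e l.+1) A w, last A w = B &
        all (fun S : {set T} => (#|S| == l) || (#|S| == l.+1)) (A :: w)].
Proof.
case=> p [pp lp _].
have lT : l <= #|T| by rewrite -cA max_card.
suff H : forall S X : {set T}, path (Dk_adj e l.+1) S p -> last S p = B ->
    S \subset X -> good l X -> conn e l X B.
  by apply: (H A A) => //; rewrite /good cA eqxx.
elim: p {pp lp} => [|S' p IH] S X /=.
  move=> _ -> BX gX; apply: (lemP e l hB) BX _ gX _ => //; by rewrite ?cB // /good cB eqxx.
case/andP => a pp lp SX gX.
have [D [dD cD DS DS']] := @adj_inter _ e l _ _ a.
have [X' [SX' gX']] : exists X' : {set T}, S' \subset X' /\ good l X'.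
  case/and3P: a => _ /andP [_ c'] _.
  have [E|NE] := eqVneq #|S'| l.+1.
    by exists S'; split => //; rewrite /good E eqxx orbT.
  have [X' [h1 h2]] := @pad T S' l ltac:(apply/andP; split; lia).
  by exists X'; split => //; rewrite /good h2 eqxx.
apply: conn_trans (IH S' X' pp lp SX' gX').
apply: (lemP e l dD cD) _ _ gX gX'.
- exact: subset_trans DS SX.
- exact: subset_trans DS' SX'.
Qed.
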